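(* Let $U$ be as in the context with $n\ge1$. Then the Sato group element of $\mathcal W_U$ is $$\mathtt G_{\mathcal W_U}=\sum_{m\ge0}\frac{1}{m!}\,\langle\varphi^m\rangle_U\,\partial_z^m ,$$ equivalently $\mathtt G_{\mathcal W_U}\cdot z^{k-1}=\Phi^U_k$ for all $k\ge1$ (so $\{\Phi^U_k\}$ is the distinguished basis $\{\mathtt G_{\mathcal W_U}\cdot z^{k-1}\}$).
   Context: $H_+=\mathbb C[z]$, $H_-=z^{-1}\mathbb C[[z^{-1}]]$, $H=H_+\oplus H_-$; ${\rm Gr}^{(0)}_+$ is the set of closed subspaces $\mathcal W\subset H$ with $\pi_+:\mathcal W\to H_+$ an isomorphism; $\mathcal D=\mathbb C((z^{-1}))[[\partial_z]]$, $\mathcal D_\pm=H_\pm[[\partial_z]]$; $\mathtt G_{\mathcal W}$ is the unique operator with $\mathtt G_{\mathcal W}-1\in\mathcal D_-$ and $\mathcal W=\mathtt G_{\mathcal W}\cdot H_+$. Let $\hbar$ be a parameter and $U(z)=\hbar^{-1}\sum_{k\le n}b_kz^k\in\mathbb C((z^{-1}))$ with $b_n\neq0$. For a formal power series $F(\varphi)$ with coefficients in $H$ define the formal Gaussian average $$\langle F(\varphi)\rangle_U:=\frac{1}{\sqrt{2\pi}}\int_{\mathbb R}d\tilde\varphi\;F\!\Big(\tfrac{\tilde\varphi}{\sqrt{U(z)}}\Big)\exp\Big(-\tfrac{\tilde\varphi^2}{2}-\sum_{j\ge3}\frac{U^{(j-2)}(z)}{j!\,U(z)^{j/2}}\tilde\varphi^j\Big),$$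 computed by expanding the non-Gaussian part of the exponential as a power series in $\tilde\varphi$ and integrating termwise against $e^{-\tilde\varphi^2/2}$ (moments $(2j-1)!!$ for $\tilde\varphi^{2j}$, $0$ for odd powers); here $U^{(m)}=\partial_z^mU$. Set $\Phi^U_k(z):=\langle(z+\varphi)^{k-1}\rangle_U$, $k\ge1$; then $\Phi^U_k=z^{k-1}(1+O(z^{-1}))$ and $\mathcal W_U:={\rm span}\{\Phi^U_1,\Phi^U_2,\dots\}$ (closure) is a point of ${\rm Gr}^{(0)}_+$. *)

(* Defs.v *)
From HB Require Import structures.
From mathcomp Require Import all_boot all_order all_algebra.
From mathcomp Require Import boolp classical_sets fsbigop reals.
From mathcomp Require Export complex.
From Stdlib Require Import ClassicalEpsilon.
Set Implicit Arguments. Unset Strict Implicit. Unset Printing Implicit Defensive.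
Import Order.TTheory GRing.Theory Num.Theory.
Local Open Scope ring_scope.
Local Open Scope classical_set_scope.

Section Laurent.
Variable C : numClosedFieldType.

(* An element of H = C((z^-1)) is given by its coefficient function:
   f k = coefficient of z^k.  Elements of H have only finitely many
   nonzero coefficients of positive degree. *)
Definition Lser := int -> C.

Definition isH (f : Lser) : Prop := exists N : int, forall k, N < k -> f k = 0.
Definition Hplus : set Lser := [set f | isH f /\ forall k, k < 0 -> f k = 0].
Definition Hminus : set Lser := [set f | forall k, 0 <= k -> f k = 0].

Definition lone : Lser := fun k => if k == 0 then 1 else 0.
Definition zpow (m : int) : Lser := fun k => if k == m then 1 else 0.
Definition ladd (f g : Lser) : Lser := fun k => f k + g k.
Definition lscale (c : C) (f : Lser) : Lser := fun k => c * f k.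
(* Cauchy product (a finite sum for f, g in H) *)
Definition lmul (f g : Lser) : Lser :=
  fun k => \sum_(i \in [set: int]) f i * g (k - i).
Definition lexp (f : Lser) (p : nat) : Lser := iter p (lmul f) lone.
Definition linv (f : Lser) : Lser :=
  epsilon (inhabits (fun _ => 0)) (fun g => isH g /\ lmul f g = lone).
Definition lder (f : Lser) : Lser := fun k => (k + 1)%:~R * f (k + 1).
Definition lderiv_n (m : nat) (f : Lser) : Lser := iter m lder f.

(* Gaussian moments: (1/sqrt(2 pi)) int x^m e^{-x^2/2} dx = (m-1)!! for m even, 0 for m odd *)
Definition gauss_moment (m : nat) : C :=
  if odd m then 0 else \prod_(i < m./2) (2 * i + 1)%:R.

(* The term of the formal expansion of < phi^a >_U indexed by the ordered
   tuple js = (j_1,...,j_r) (encoded as x_i = j_i - 3 >= 0) coming from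
   (1/r!) (- sum_{j>=3} U^{(j-2)}/(j! U^{j/2}) phi~^j)^r, integrated against
   the Gaussian with F(phi~/sqrt U) = phi~^a U^{-a/2}:
   (1/r!) (-1)^r prod_i (U^{(j_i-2)}/j_i!) * U^{-(a+sum j)/2} * (a+sum j - 1)!!. *)
Definition avg_term (U : Lser) (a : nat) (xs : seq nat) : Lser :=
  let js := [seq x + 3 | x <- xs] in
  let r := size xs in
  let tot := (a + sumn js)%N in
  lscale (gauss_moment tot * (-1) ^+ r / (r`!)%:R)
    (lmul (foldr (fun j acc => lmul (lscale ((j`!)%:R^-1) (lderiv_n (j - 2) U)) acc) lone js)
          (lexp (linv U) tot./2)).

(* < phi^a >_U : the (z^-1-adically locally finite) sum of all terms *)
Definition gavg (U : Lser) (a : nat) : Lser :=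
  fun k => \sum_(xs \in [set: seq nat]) avg_term U a xs k.

(* Phi^U_k = < (z + phi)^(k-1) >_U, expanded binomially (linearity of < . >) *)
Definition PhiU (U : Lser) (k : nat) : Lser :=
  fun i => \sum_(a < k) ('C(k.-1, a))%:R * lmul (zpow (k.-1 - a)%:Z) (gavg U a) i.

Definition spanPhi (U : Lser) : set Lser :=
  [set f | exists (N : nat) (c : nat -> C),
      f = fun i => \sum_(k < N) c k * PhiU U k.+1 i].

(* closure in H for the z^-1-adic topology (neighbourhoods of 0: z^N C[[z^-1]]) *)
Definition lclosure (V : set Lser) : set Lser :=
  [set f | isH f /\ forall N : int, exists v, V v /\ forall k, N <= k -> f k = v k].

Definition WU (U : Lser) : set Lser := lclosure (spanPhi U).

(* Operators in D = C((z^-1))[[d_z]]: A = sum_m A m * d_z^m *)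
Definition Dop := nat -> Lser.
Definition Dminus (A : Dop) : Prop := forall m, isH (A m) /\ Hminus (A m).
Definition Gminus1_in_Dminus (G : Dop) : Prop :=
  Dminus (fun m => if m == 0%N then ladd (G m) (lscale (-1) lone) else G m).
(* action of an operator on H_+ (finite sum for polynomials) *)
Definition Dact (G : Dop) (p : Lser) : Lser :=
  fun k => \sum_(m \in [set: nat]) lmul (G m) (lderiv_n m p) k.

Definition is_Sato_element (W : set Lser) (G : Dop) : Prop :=
  Gminus1_in_Dminus G /\ W = lclosure (Dact G @` Hplus).

Definition gaussG (U : Lser) : Dop := fun m => lscale ((m`!)%:R^-1) (gavg U m).

End Laurent.

(* Main.v *)
Require Import Defs.
From HB Require Import structures.
From mathcomp Require Import all_boot all_order all_algebra.
From mathcomp Require Import boolp classical_sets fsbigop reals complex.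
From mathcomp Require Import zify ring lra.
From Stdlib Require Import ClassicalEpsilon.
Import Order.TTheory GRing.Theory Num.Theory.
Local Open Scope ring_scope.
Set Implicit Arguments. Unset Strict Implicit. Unset Printing Implicit Defensive.

Section H.
Variable C : numClosedFieldType.
Implicit Types f g h : Lser C.

Lemma fsumT (T : choiceType) (r : seq T) (F : T -> C) :
  uniq r -> (forall i, i \notin r -> F i = 0) ->
  \sum_(i \in [set: T]) F i = \sum_(i <- r) F i.
Proof.
move=> ur hF; rewrite (fsbigE r) //.
  by apply: eq_bigl => i; rewrite in_setT.
by move=> i _; apply: hF.
Qed.

Lemma fsum0 (T : choiceType) (F : T -> C) :
  (forall i, F i = 0) -> \sum_(i \in [set: T]) F i = 0.
Proof. by move=> h; apply: fsbig1 => i _; apply: h. Qed.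

Definition zab (N : int) f := forall k, N < k -> f k = 0.

Lemma lmul_zab N M f g : zab N f -> zab M g -> zab (N + M) (lmul f g).
Proof.
move=> hf hg k hk; rewrite /lmul; apply: fsum0 => i.
case: (ltrP N i) => hi; first by rewrite hf // mul0r.
by rewrite hg ?mulr0 //; lia.
Qed.

Lemma lone_zab : zab 0 (lone C).
Proof. by move=> k hk; rewrite /lone; case: eqP => // kE; rewrite kE ltxx in hk. Qed.

Lemma lscale_zab N c f : zab N f -> zab N (lscale c f).
Proof. by move=> hf k hk; rewrite /lscale hf ?mulr0. Qed.

Lemma lder_zab N f : zab N f -> zab (N - 1) (lder f).
Proof. by move=> hf k hk; rewrite /lder hf ?mulr0 //; lia. Qed.

Lemma lderiv_zab N m f : zab N f -> zab (N - m%:Z) (lderiv_n m f).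
Proof.
elim: m => [|m IH] hf /=; first by rewrite subr0.
have := lder_zab (IH hf); rewrite /lderiv_n /=.
by move=> h k hk; apply: h; lia.
Qed.

Lemma lexp_zab N f p : zab N f -> zab (N * p%:Z) (lexp f p).
Proof.
move=> hf; elim: p => [|p IH]; first by rewrite mulr0; exact: lone_zab.
rewrite /lexp iterS -/(lexp f p).
have := lmul_zab hf IH; move=> h k hk; apply: h; lia.
Qed.

Lemma arith (n r S a h : nat) : (1 <= n)%N -> (h + h = a + S + 3 * r)%N ->
  (r%:Z * (n%:Z - 1) - S%:Z) + (- n%:Z) * h%:Z <=
  (if (a == 0%N) && (r == 0%N) then 0 else -1).
Proof.
move=> hn hh. case: ifP => /andP.
  case=> /eqP ha /eqP hr; subst; nia.
move=> hn0. have : (0 < a + r)%N by lia. nia.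
Qed.

Lemma sumn_map3 (xs : seq nat) : sumn [seq x + 3 | x <- xs] = (sumn xs + 3 * size xs)%N.
Proof. elim: xs => //= x xs ->; lia. Qed.

Lemma foldr_zab (n : int) (U : Lser C) (xs : seq nat) : zab n U ->
  zab ((size xs)%:Z * (n - 1) - (sumn xs)%:Z)
   (foldr (fun j acc => lmul (lscale ((j`!)%:R^-1) (lderiv_n (j - 2) U)) acc) (lone C)
      [seq x + 3 | x <- xs]).
Proof.
move=> hU; elim: xs => [|x xs IH] /=.
  by move=> k hk; apply: lone_zab; lia.
have h1 := lscale_zab ((x + 3)`!%:R^-1) (lderiv_zab (m:=(x + 3 - 2)%N) hU).
have := lmul_zab h1 IH; move=> h k hk; apply: h.
have -> : (x + 3 - 2 = x.+1)%N by lia.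
lia.
Qed.

Lemma avg_term_zab (U : Lser C) (n : nat) a xs : (1 <= n)%N -> zab n%:Z U ->
  zab (- n%:Z) (linv U) ->
  zab (if (a == 0%N) && (xs == [::]) then 0 else -1) (avg_term U a xs).
Proof.
move=> hn hU hV; rewrite /avg_term.
set tot := (a + _)%N.
case: (boolP (odd tot)) => hodd.
  by move=> k _; rewrite /lscale /gauss_moment hodd !mul0r.
apply: lscale_zab.
have h := lmul_zab (foldr_zab (xs:=xs) hU) (lexp_zab (p:=tot./2) hV).
move=> k hk; apply: h.
have hh : (tot./2 + tot./2 = a + sumn xs + 3 * size xs)%N.
  have := odd_double_half tot; rewrite (negbTE hodd) add0n -addnn => ->.
  by rewrite /tot sumn_map3 addnA.
have := @arith n (size xs) (sumn xs) a _ hn hh.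
have -> : (size xs == 0%N) = (xs == [::]) by clear; case: xs.
move=> hle; exact: (le_lt_trans hle hk).
Qed.

Section Inv.
Variables (f : Lser C) (d : int).
Hypotheses (hf : zab d f) (hd : f d != 0).

Let u (t : nat) := f (d - t%:Z).
Let c0 := (u 0)^-1.
Fixpoint cs (j : nat) : seq C :=
  if j is j'.+1 then rcons (cs j') (- c0 * \sum_(t < j'.+1) u t.+1 * nth 0 (cs j') (j' - t))
  else [:: c0].
Let coef j := nth 0 (cs j) j.

Lemma size_cs j : size (cs j) = j.+1.
Proof. by elim: j => //= j IH; rewrite size_rcons IH. Qed.

Lemma nth_cs i j : (i <= j)%N -> nth 0 (cs j) i = coef i.
Proof.
elim: j => [|j IH] hij; first by move: hij; rewrite leqn0 => /eqP ->.
rewrite /= nth_rcons size_cs; case: ltnP => hi; first by rewrite IH.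
have -> : i = j.+1 by apply/eqP; rewrite eqn_leq hij.
by rewrite /coef /= nth_rcons size_cs ltnn eqxx.
Qed.

Lemma coefS j : coef j.+1 = - c0 * \sum_(t < j.+1) u t.+1 * coef (j - t).
Proof.
rewrite {1}/coef /= nth_rcons size_cs ltnn eqxx; congr (_ * _).
by apply: eq_bigr => t _; rewrite nth_cs // leq_subr.
Qed.

Definition ginv : Lser C := fun k => if k <= - d then coef (absz (- d - k)) else 0.

Lemma ginv_zab : zab (- d) ginv.
Proof. by move=> k hk; rewrite /ginv leNgt hk. Qed.

Lemma u0c0 : u 0 * c0 = 1.
Proof. by rewrite /c0 mulfV // /u subr0. Qed.

Lemma lmul_ginv : lmul f ginv = lone C.
Proof.
apply/funext => k.
case: (ltrP 0 k) => hk.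
  have := lmul_zab hf ginv_zab; rewrite subrr => h; rewrite h //.
  by rewrite lone_zab.
set J := absz (- k).
have hJ : k = - J%:Z by rewrite /J; lia.
rewrite /lmul (fsumT (r := [seq d - t%:Z | t <- iota 0 J.+1])); last first.
- move=> i hi; case: (ltrP d i) => hdi; first by rewrite hf ?mul0r.
  case: (ltrP i (d - J%:Z)) => hi2.
    by rewrite /ginv ifF ?mulr0 //; apply/negbTE; rewrite -ltNge; lia.
  exfalso; move/negP: hi; apply; apply/mapP; exists (absz (d - i)).
    by rewrite mem_iota; lia.
  by lia.
- rewrite map_inj_uniq ?iota_uniq // => x y; lia.
rewrite big_map -(subn0 J.+1) -/(index_iota 0 J.+1) big_mkord.
have -> : \sum_(i < J.+1) f (d - i%:Z) * ginv (k - (d - i%:Z)) =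
          \sum_(i < J.+1) u i * coef (J - i).
  apply: eq_bigr => i _; rewrite /ginv ifT; last by have := ltn_ord i; lia.
  congr (_ * coef _); have := ltn_ord i; lia.
rewrite /lone hJ; case: J {hJ} => [|j].
  by rewrite big_ord1 /coef /= u0c0.
rewrite big_ord_recl /= subn0 coefS.
under eq_bigr => i _ do rewrite /bump /= add1n subSS.
by rewrite mulrA mulrN u0c0 mulN1r addNr.
Qed.

Lemma inv_top g : isH g -> lmul f g = lone C -> zab (- d) g.
Proof.
move=> [N hN] hfg.
have claim : forall t : nat, forall k, - d < k -> N - t%:Z < k -> g k = 0.
  elim=> [|t IH] k hk1 hk2; first by apply: hN; lia.
  case: (ltrP (N - t%:Z) k) => hk3; first exact: IH.
  have hk : k = N - t%:Z by lia.
  have := congr1 (fun F => F (d + k)) hfg.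
  rewrite /lmul (fsumT (r := [:: d])) //; last first.
    move=> i; rewrite inE => /eqP hi.
    case: (ltrP d i) => hdi; first by rewrite hf ?mul0r.
    by rewrite IH ?mulr0 //; lia.
  rewrite big_seq1 (addrC d k) addrK lone_zab; last by lia.
  by move/eqP; rewrite mulf_eq0 (negbTE hd) /= => /eqP.
move=> k hk; apply: (claim (absz (N - k)).+1) => //; lia.
Qed.

End Inv.

Lemma linv_zab f d : zab d f -> f d != 0 -> zab (- d) (linv f).
Proof.
move=> hf hd; rewrite /linv.
set P := fun g => _.
have : P (epsilon (inhabits (fun=> 0)) P).
  apply: epsilon_spec; exists (ginv f d); split; last exact: lmul_ginv.
  by exists (- d); apply: ginv_zab.
by case=> h1 h2; apply: inv_top h1 h2.
Qed.


Lemma lmul_zpowl q g i0 : lmul (zpow C q) g i0 = g (i0 - q).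
Proof.
rewrite /lmul (fsumT (r := [:: q])) //.
  by rewrite big_seq1 /zpow eqxx mul1r.
by move=> i; rewrite inE /zpow => /negbTE ->; rewrite mul0r.
Qed.

Lemma lmul_zpowr f c q i0 : lmul f (fun i => c * zpow C q i) i0 = c * f (i0 - q).
Proof.
rewrite /lmul (fsumT (r := [:: i0 - q])) //.
  by rewrite big_seq1 /zpow subKr eqxx mulr1 mulrC.
move=> i; rewrite inE /zpow => hi; rewrite ifF ?mulr0 ?mul0r //.
by apply/negbTE; apply: contra hi => /eqP <-; rewrite subKr.
Qed.

Lemma lderiv_zpow m (j : nat) :
  lderiv_n m (zpow C j%:Z) = fun i => (j ^_ m)%:R * zpow C (j - m)%N i.
Proof.
elim: m => [|m IH].
  by apply/funext => i; rewrite ffactn0 subn0 mul1r.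
rewrite /lderiv_n iterS -/(lderiv_n m _) IH; apply/funext => i.
rewrite /lder /zpow ffactnSr natrM.
case: (ltnP m j) => hmj.
  case: eqP => hi.
    rewrite ifT; last by apply/eqP; lia.
    by rewrite !mulr1 mulrC; congr (_ * _); rewrite hi pmulrn.
  by rewrite ifF ?mulr0 //; apply/negbTE/eqP; lia.
have hz : (j - m = 0)%N by lia.
rewrite hz mulr0 mul0r; case: eqP => [->|_]; by rewrite ?mulr0 ?mul0r.
Qed.

Definition supp (D : nat) (h : Lser C) := forall j, (j < 0) || (D%:Z < j) -> h j = 0.

Lemma lmul_fin f h D i0 : supp D h ->
  lmul f h i0 = \sum_(t < D.+1) f (i0 - t%:Z) * h t%:Z.
Proof.
move=> hh; rewrite /lmul (fsumT (r := [seq i0 - t%:Z | t <- iota 0 D.+1])).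
- rewrite big_map -(subn0 D.+1) -/(index_iota 0 D.+1) big_mkord.
  by apply: eq_bigr => t _; rewrite subKr.
- by rewrite map_inj_uniq ?iota_uniq // => x y; lia.
move=> i hi; rewrite hh ?mulr0 //.
apply/negP => /negP; rewrite negb_or -!leNgt => /andP[h1 h2].
move/negP: hi; apply; apply/mapP; exists (absz (i0 - i)).
  by rewrite mem_iota; lia.
by lia.
Qed.

Lemma lder_supp D h : supp D.+1 h -> supp D (lder h).
Proof.
move=> hh j hj; rewrite /lder.
case: (boolP (j == -1)) => [/eqP ->|hj1]; first by rewrite addNr mul0r.
rewrite hh ?mulr0 //; apply/orP; move/orP: hj => [] ?; [left|right]; lia.
Qed.

Lemma supp_le D D' h : (D <= D')%N -> supp D h -> supp D' h.
Proof. by move=> hD hh j hj; apply: hh; move/orP: hj => [] ?; apply/orP; [left|right]; lia. Qed.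

Lemma lder_supp0 h : supp 0 h -> lder h = fun=> 0.
Proof.
move=> hh; apply/funext => j; rewrite /lder.
case: (boolP (j == -1)) => [/eqP ->|hj1]; first by rewrite addNr mul0r.
rewrite hh ?mulr0 //; apply/orP; case: (ltrP j 0) => ?; [left|right]; lia.
Qed.

Lemma lderiv_supp D m h : supp D h -> supp (D - m) (lderiv_n m h).
Proof.
elim: m => [|m IH] hh; first by rewrite subn0.
rewrite /lderiv_n iterS -/(lderiv_n m _).
case: (ltnP m D) => hm.
  apply: lder_supp; have -> : (D - m.+1).+1 = (D - m)%N by lia.
  exact: IH.
have -> : (D - m.+1 = 0)%N by lia.
have : supp 0 (lderiv_n m h) by have := IH hh; have -> : (D - m = 0)%N by lia.
by move/lder_supp0 => ->; move=> j _.
Qed.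

Lemma lderiv_big D m h : (D < m)%N -> supp D h -> lderiv_n m h = fun=> 0.
Proof.
move=> hm hh; case: m hm => // m hm.
rewrite /lderiv_n iterS -/(lderiv_n m _); apply: lder_supp0.
by have := lderiv_supp (m:=m) hh; have -> : (D - m = 0)%N by lia.
Qed.

Lemma Dact_fin (G : Dop C) h D i0 : supp D h ->
  Dact G h i0 = \sum_(m < D.+1) \sum_(t < D.+1) G m (i0 - t%:Z) * lderiv_n m h t%:Z.
Proof.
move=> hh; rewrite /Dact (fsumT (r := iota 0 D.+1)) ?iota_uniq //.
  rewrite -(subn0 D.+1) -/(index_iota 0 D.+1) big_mkord.
  apply: eq_bigr => m _; apply: lmul_fin.
  by apply: supp_le (lderiv_supp (m:=m) hh); apply: leq_subr.
move=> m; rewrite mem_iota add0n /= -leqNgt => hm.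
rewrite (lderiv_big hm hh) /lmul; apply: fsum0 => i; exact: mulr0.
Qed.


Lemma Dact_zpow (G : Dop C) (j : nat) i0 :
  Dact G (zpow C j%:Z) i0 = \sum_(m < j.+1) (j ^_ m)%:R * G m (i0 - (j - m)%N%:Z).
Proof.
rewrite /Dact.
transitivity (\sum_(m \in [set: nat]) (j ^_ m)%:R * G m (i0 - (j - m)%N%:Z)).
  by apply: eq_fsbigr => m _; rewrite lderiv_zpow lmul_zpowr.
rewrite (fsumT (r := iota 0 j.+1)) ?iota_uniq //.
  by rewrite -(subn0 j.+1) -/(index_iota 0 j.+1) big_mkord.
move=> m; rewrite mem_iota add0n /= -leqNgt => hm.
by rewrite ffact_small ?mul0r.
Qed.

Lemma Dact_gauss (U : Lser C) (j : nat) :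
  Dact (gaussG U) (zpow C j%:Z) = PhiU U j.+1.
Proof.
apply/funext => i; rewrite Dact_zpow /PhiU /=; apply: eq_bigr => m _.
rewrite lmul_zpowl /gaussG /lscale mulrA; congr (_ * _).
rewrite -bin_ffact natrM mulfK //.
by rewrite pnatr_eq0 -lt0n fact_gt0.
Qed.


Lemma lderiv_lin m N (c : nat -> C) (h : nat -> Lser C) :
  lderiv_n m (fun i => \sum_(k < N) c k * h k i) =
  fun i => \sum_(k < N) c k * lderiv_n m (h k) i.
Proof.
elim: m => [|m IH] //.
rewrite /lderiv_n iterS -/(lderiv_n m _) IH; apply/funext => i.
rewrite /lder mulr_sumr; apply: eq_bigr => k _.
by rewrite /lderiv_n iterS /lder mulrCA.
Qed.

Lemma supp_zpow N (k : nat) : (k <= N)%N -> supp N (zpow C k%:Z).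
Proof. move=> hk j hj; rewrite /zpow ifF //; apply/negbTE/eqP; lia. Qed.

Lemma supp_sum N (c : nat -> C) : supp N (fun i => \sum_(k < N) c k * zpow C k%:Z i).
Proof.
move=> j hj; apply: big1 => k _.
by rewrite (@supp_zpow N k) ?mulr0 // ltnW.
Qed.

Lemma Dact_lin (G : Dop C) N (c : nat -> C) :
  Dact G (fun i => \sum_(k < N) c k * zpow C k%:Z i) =
  fun i => \sum_(k < N) c k * Dact G (zpow C k%:Z) i.
Proof.
apply/funext => i0; rewrite (Dact_fin G i0 (@supp_sum N c)).
transitivity (\sum_(k < N) c k * \sum_(m < N.+1) \sum_(t < N.+1)
   G m (i0 - t%:Z) * lderiv_n m (zpow C k%:Z) t%:Z); last first.
  apply: eq_bigr => k _; rewrite (Dact_fin G i0 (supp_zpow (ltnW (ltn_ord k)))).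
  by [].
transitivity (\sum_(m < N.+1) \sum_(t < N.+1) \sum_(k < N)
   c k * (G m (i0 - t%:Z) * lderiv_n m (zpow C k%:Z) t%:Z)).
  apply: eq_bigr => m _; apply: eq_bigr => t _.
  rewrite (lderiv_lin m N c (fun k => zpow C k%:Z)) mulr_sumr.
  apply: eq_bigr => k _; exact: mulrCA.
under eq_bigr => m _ do rewrite exchange_big /=.
rewrite exchange_big /=; apply: eq_bigr => k _.
rewrite mulr_sumr; apply: eq_bigr => m _; by rewrite mulr_sumr.
Qed.

Lemma hplus_rep p : Hplus p -> exists N : nat, p = fun i => \sum_(k < N) p k%:Z * zpow C k%:Z i.
Proof.
move=> [[N0 hN0] hneg]; exists (absz N0).+1; apply/funext => i.
case: (ltrP i 0) => hi.
  rewrite hneg //; symmetry; apply: big1 => k _; rewrite /zpow ifF ?mulr0 //.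
  by apply/negbTE/eqP; lia.
have hiE : i = (absz i)%:Z by lia.
case: (ltnP (absz i) (absz N0).+1) => hm.
  rewrite (bigD1 (Ordinal hm)) //= /zpow -hiE eqxx mulr1 big1 ?addr0 //.
  move=> k hk; rewrite ifF ?mulr0 //; apply/negbTE/eqP => hik.
  by move/eqP: hk; apply; apply: val_inj => /=; lia.
rewrite hN0; last by lia.
symmetry; apply: big1 => k _; rewrite /zpow ifF ?mulr0 //.
apply/negbTE/eqP; have := ltn_ord k; lia.
Qed.

Lemma span_eq (U : Lser C) :
  spanPhi U = (Dact (gaussG U) @` (@Hplus C))%classic.
Proof.
apply/seteqP; split.
- move=> f [N [c ->]].
  exists (fun i => \sum_(k < N) c k * zpow C k%:Z i).
    split; first by exists N%:Z => k hk; apply: supp_sum; apply/orP; right.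
    by move=> k hk; apply: supp_sum; apply/orP; left.
  by rewrite Dact_lin; apply/funext => i; apply: eq_bigr => k _; rewrite Dact_gauss.
- move=> f [p hp <-]; have [N hN] := hplus_rep hp.
  exists N, (fun k => p k%:Z); rewrite {1}hN (Dact_lin _ N (fun k => p k%:Z)); apply/funext => i.
  by apply: eq_bigr => k _; rewrite Dact_gauss.
Qed.

Section Gauss.
Variables (U : Lser C) (n : nat).
Hypotheses (hn : (1 <= n)%N) (hU : zab n%:Z U) (hUn : U n%:Z != 0).

Let hV : zab (- n%:Z) (linv U) := linv_zab hU hUn.


Lemma gavg_zab a : zab 0 (gavg U a).
Proof.
move=> k hk; rewrite /gavg; apply: fsum0 => xs.
apply: (@avg_term_zab U n a xs hn hU hV); case: ifP => _ //; lia.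
Qed.

Lemma gavg_neg a : (0 < a)%N -> forall k, 0 <= k -> gavg U a k = 0.
Proof.
move=> ha k hk; rewrite /gavg; apply: fsum0 => xs.
apply: (@avg_term_zab U n a xs hn hU hV); rewrite ifF; first lia.
by case: a ha.
Qed.

Lemma gavg0 k : 0 <= k -> gavg U 0 k = lone C k.
Proof.
move=> hk; rewrite /gavg (fsumT (r := [:: [::]])) //.
  rewrite big_seq1 /avg_term /= /lscale /gauss_moment /=.
  rewrite /lexp /=; change (lone C) with (zpow C 0) at 1.
  by rewrite lmul_zpowl subr0 big_ord0 !mul1r invr1; exact: mul1r.
move=> xs; rewrite inE => hxs.
apply: (@avg_term_zab U n 0 xs hn hU hV); rewrite ifF; first lia.
by apply/negbTE.
Qed.

Lemma gauss_Dminus : Gminus1_in_Dminus (gaussG U).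
Proof.
move=> m; case: (boolP (m == 0%N)) => [/eqP ->|hm] /=.
  split.
    exists 0 => k hk; rewrite /ladd /gaussG /lscale gavg_zab // lone_zab //.
    by rewrite !mulr0 addr0.
  move=> k hk; rewrite /ladd /gaussG /lscale gavg0 //.
  by rewrite invr1 mul1r mulN1r subrr.
split.
  by exists 0 => k hk; rewrite /gaussG /lscale gavg_zab // mulr0.
by move=> k hk; rewrite /gaussG /lscale gavg_neg ?mulr0 // lt0n.
Qed.

End Gauss.

End H.

Theorem mainTheorem7 (R : realType) (hbar : R[i]) (n : nat) (b : int -> R[i]) :
  hbar != 0 -> (1 <= n)%N ->
  (forall k : int, n%:Z < k -> b k = 0) -> b n%:Z != 0 ->
  let U : Lser R[i] := fun k => hbar^-1 * b k in
  is_Sato_element (WU U) (gaussG U) /\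
  (forall k : nat, (1 <= k)%N -> Dact (gaussG U) (zpow R[i] (k.-1)%:Z) = PhiU U k).
Proof.
move=> hh hn hb hbn U.
have hU : zab n%:Z U by move=> k hk; rewrite /U hb ?mulr0.
have hUn : U n%:Z != 0 by rewrite /U mulf_neq0 ?invr_eq0.
split.
  split; first exact: gauss_Dminus hn hU hUn.
  by rewrite /WU span_eq.
by move=> k; case: k => // k _; rewrite Dact_gauss.
Qed.
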